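(* For $(s_n,x_n),(s,x)\in T\times[0,\infty)$, as $n\to\infty$, $$\rho_2((s_n,x_n),(s,x))\to0\iff\big[x_n\to x\ \text{and}\ x\,(R_{s_n,s}(1,1)-1)\to0\big].$$
   Context: $(U_1(t))_{t\in T}$ is a process with uniform $(0,1)$ margins such that the bivariate tail copulas $R_{s,t}(x,y)=\lim_{u\downarrow0}u^{-1}\mathbb{P}\{U_1(s)\le ux,U_1(t)\le uy\}$ exist for all $s,t\in T$, $x,y\ge0$. $\rho_2((s,x),(t,y))=(x-2R_{s,t}(x,y)+y)^{1/2}$, the standard deviation semimetric of a centered Gaussian process $W$ on $T\times[0,\infty)$ with covariance $R_{s,t}(x,y)$. *)

(* Defs.v *)
From Stdlib Require Import Reals Lra.
Open Scope R_scope.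

Definition prob_space (Omega : Type) (F : (Omega -> Prop) -> Prop)
  (P : (Omega -> Prop) -> R) : Prop :=
  F (fun _ => True) /\
  (forall A, F A -> F (fun w => ~ A w)) /\
  (forall A : nat -> Omega -> Prop, (forall n, F (A n)) ->
     F (fun w => exists n, A n w)) /\
  (forall A, F A -> 0 <= P A) /\
  P (fun _ => True) = 1 /\
  (forall A : nat -> Omega -> Prop,
     (forall n, F (A n)) ->
     (forall m n w, m <> n -> A m w -> A n w -> False) ->
     infinite_sum (fun n => P (A n)) (P (fun w => exists n, A n w))).

Definition uniform_margins (Omega T : Type) (F : (Omega -> Prop) -> Prop)
  (P : (Omega -> Prop) -> R) (U : T -> Omega -> R) : Prop :=
  (forall t u, F (fun w => U t w <= u)) /\
  (forall t u, 0 <= u <= 1 -> P (fun w => U t w <= u) = u).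

Definition is_tail_copula (Omega T : Type) (P : (Omega -> Prop) -> R)
  (U : T -> Omega -> R) (Rtc : T -> T -> R -> R -> R) : Prop :=
  forall s t x y, 0 <= x -> 0 <= y ->
    forall eps, 0 < eps -> exists delta, 0 < delta /\
      forall u, 0 < u < delta ->
        Rabs (/ u * P (fun w => U s w <= u * x /\ U t w <= u * y)
              - Rtc s t x y) < eps.

Definition rho2 {T : Type} (Rtc : T -> T -> R -> R -> R)
  (p q : T * R) : R :=
  sqrt (snd p - 2 * Rtc (fst p) (fst q) (snd p) (snd q) + snd q).

(* Main.v *)
Require Import Defs.
From Stdlib Require Import Reals Lra Lia Classical FunctionalExtensionality PropExtensionality.
Open Scope R_scope.

Lemma pred_ext {O : Type} (A B : O -> Prop) : (forall w, A w <-> B w) -> A = B.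
Proof. intros H; apply functional_extensionality; intro w; apply propositional_extensionality; auto. Qed.

Lemma F_compl O F P (hP : prob_space O F P) A : F A -> F (fun w => ~ A w).
Proof. destruct hP as (_&h&_); auto. Qed.

Lemma F_union O F P (hP: prob_space O F P) A B : F A -> F B -> F (fun w => A w \/ B w).
Proof.
  intros HA HB. destruct hP as (_&_&hU&_).
  set (C := fun n:nat => match n with 0%nat => A | _ => B end).
  replace (fun w => A w \/ B w) with (fun w => exists n, C n w).
  - apply hU. intros [|n]; simpl; auto.
  - apply pred_ext. intro w; split.
    + intros [[|n] H]; simpl in H; auto.
    + intros [H|H]; [exists 0%nat | exists 1%nat]; simpl; auto.
Qed.

Lemma F_inter O F P (hP: prob_space O F P) A B : F A -> F B -> F (fun w => A w /\ B w).
Proof.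
  intros HA HB.
  assert (H := F_compl _ _ _ hP _ (F_union _ _ _ hP _ _ (F_compl _ _ _ hP _ HA) (F_compl _ _ _ hP _ HB))).
  replace (fun w => A w /\ B w) with (fun w => ~ (~ A w \/ ~ B w)); [exact H|].
  apply pred_ext; intro w; split; [intro h; split; apply NNPP; tauto | tauto].
Qed.

Lemma P_empty O F P (hP : prob_space O F P) : P (fun _ => False) = 0.
Proof.
  assert (HF : F (fun _ : O => False)).
  { replace (fun _ : O => False) with (fun w : O => ~ True).
    - apply (F_compl _ _ _ hP). apply hP.
    - apply pred_ext; intro; tauto. }
  destruct hP as (_&_&_&_&_&hadd).
  assert (H : infinite_sum (fun _ : nat => P (fun _ : O => False))
      (P (fun _ : O => exists _ : nat, False)))
   by exact (hadd (fun _ => fun _ => False) (fun _ => HF) (fun m n w _ h _ => h)).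
  assert (Hq : P (fun _ : O => exists _ : nat, False) = P (fun _ => False))
    by (f_equal; apply pred_ext; intro; split; [intros [_ h]; exact h|tauto]).
  rewrite Hq in H.
  set (p := P (fun _ => False)) in *.
  destruct (Req_dec p 0) as [|Hp]; auto. exfalso.
  assert (Hpos : 0 < Rabs p / 2) by (apply Rabs_pos_lt in Hp; lra).
  destruct (H _ Hpos) as [N HN].
  assert (h1 := HN N (le_n _)). assert (h2 := HN (S N) (le_S _ _ (le_n _))).
  unfold R_dist in *. simpl in h2. revert h1 h2.
  generalize (sum_f_R0 (fun _ : nat => p) N). intros S h1 h2.
  split_Rabs; lra.
Qed.

Lemma P_add O F P (hP : prob_space O F P) A B : F A -> F B ->
  (forall w, A w -> B w -> False) -> P (fun w => A w \/ B w) = P A + P B.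
Proof.
  intros HA HB Hd.
  assert (He := P_empty _ _ _ hP).
  assert (HF : F (fun _ : O => False)).
  { replace (fun _ : O => False) with (fun w : O => ~ True).
    - apply (F_compl _ _ _ hP). apply hP.
    - apply pred_ext; intro; tauto. }
  destruct hP as (_&_&_&_&_&hadd).
  set (C := fun n:nat => match n with 0%nat => A | 1%nat => B | _ => fun _ => False end).
  assert (H := hadd C).
  replace (fun w => exists n, C n w) with (fun w => A w \/ B w) in H.
  2:{ apply pred_ext; intro w; split.
      - intros [h|h]; [exists 0%nat | exists 1%nat]; exact h.
      - intros [[|[|n]] h]; simpl in h; tauto. }
  apply (uniqueness_sum (fun n => P (C n))).
  - apply H.
    + intros [|[|n]]; simpl; auto.
    + intros m n w Hmn Hm Hn; destruct m as [|[|m]]; destruct n as [|[|n]];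
        simpl in *; try contradiction; try (now apply Hmn); eauto.
  - assert (Hs : forall n, sum_f_R0 (fun n => P (C n)) (S n) = P A + P B).
    { induction n. simpl. reflexivity. simpl sum_f_R0 in *. rewrite IHn.
      simpl. rewrite He. ring. }
    intros eps Heps. exists 1%nat. intros [|n] Hn; [lia|].
    unfold R_dist. rewrite Hs. rewrite Rminus_diag, Rabs_R0. exact Heps.
Qed.

Lemma P_split O F P (hP : prob_space O F P) A B : F A -> F B ->
  (forall w, A w -> B w) -> P B = P A + P (fun w => B w /\ ~ A w).
Proof.
  intros HA HB Hs.
  rewrite <- (P_add _ _ _ hP); auto.
  - f_equal. apply pred_ext; intro w; split; [|intuition].
    intro hb; destruct (classic (A w)); auto.
  - apply (F_inter _ _ _ hP); auto. apply (F_compl _ _ _ hP); auto.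
  - intuition.
Qed.

Lemma P_mono O F P (hP : prob_space O F P) A B : F A -> F B ->
  (forall w, A w -> B w) -> P A <= P B.
Proof.
  intros HA HB Hs. rewrite (P_split _ _ _ hP A B); auto.
  assert (0 <= P (fun w => B w /\ ~ A w)); [|lra].
  apply hP.
  apply (F_inter _ _ _ hP); auto. apply (F_compl _ _ _ hP); auto.
Qed.
Definition flim (f : R -> R) (L : R) : Prop :=
  forall eps, 0 < eps -> exists delta, 0 < delta /\
    forall u, 0 < u < delta -> Rabs (f u - L) < eps.

Lemma lim2_le f g L1 L2 M d0 : 0 < d0 -> flim f L1 -> flim g L2 ->
  (forall u, 0 < u < d0 -> f u - g u <= M) -> L1 - L2 <= M.
Proof.
  intros Hd0 Hf Hg H. apply Rnot_lt_le; intro Hc.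
  assert (He : 0 < (L1 - L2 - M) / 2) by lra.
  destruct (Hf _ He) as [d1 [Hd1 H1]]. destruct (Hg _ He) as [d2 [Hd2 H2]].
  set (u := Rmin d0 (Rmin d1 d2) / 2).
  assert (Hm : 0 < Rmin d0 (Rmin d1 d2)) by (repeat apply Rmin_pos; auto).
  assert (Hm0 := Rmin_l d0 (Rmin d1 d2)).
  assert (Hm1 := Rmin_r d0 (Rmin d1 d2)).
  assert (Hm2 := Rmin_l d1 d2). assert (Hm3 := Rmin_r d1 d2).
  assert (a1 := H1 u ltac:(unfold u; lra)).
  assert (a2 := H2 u ltac:(unfold u; lra)).
  assert (a3 := H u ltac:(unfold u; lra)).
  split_Rabs; lra.
Qed.

Lemma flim_const c : flim (fun _ => c) c.
Proof. intros eps He; exists 1; split; [lra|]; intros; rewrite Rminus_diag, Rabs_R0; auto. Qed.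


Definition tf {Omega T : Type} (P : (Omega -> Prop) -> R) (U : T -> Omega -> R) s t a b :=
  fun u => / u * P (fun w => U s w <= u * a /\ U t w <= u * b).

Lemma hR_lim Omega T P U Rtc (hR : is_tail_copula Omega T P U Rtc) s t a b :
  0 <= a -> 0 <= b -> flim (tf P U s t a b) (Rtc s t a b).
Proof. intros ha hb eps He. apply (hR s t a b ha hb eps He). Qed.

Lemma ev_F Omega T F P U (hU : uniform_margins Omega T F P U) t v :
  F (fun w => U t w <= v).
Proof. apply hU. Qed.

Lemma small_u a u : 0 <= a -> 0 < u < / (a + 1) -> 0 <= u * a <= 1.
Proof.
  intros ha [h1 h2]. assert (Hinv : / (a+1) * (a+1) = 1) by (field; lra).
  assert (0 < / (a+1)) by (apply Rinv_0_lt_compat; lra). nra.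
Qed.

Lemma R_le_a Omega T F P U Rtc (hP : prob_space Omega F P)
  (hU : uniform_margins Omega T F P U) (hR : is_tail_copula Omega T P U Rtc) s t a b :
  0 <= a -> 0 <= b -> Rtc s t a b <= a.
Proof.
  intros ha hb.
  assert (H := lim2_le _ _ _ _ a (/ (a+1)) ltac:(apply Rinv_0_lt_compat; lra)
    (hR_lim _ _ _ _ _ hR s t a b ha hb) (flim_const 0)).
  cut (Rtc s t a b - 0 <= a); [lra|]. apply H.
  intros u Hu. destruct (small_u a u ha Hu) as [h1 h2]. unfold tf.
  assert (HP : P (fun w => U s w <= u * a /\ U t w <= u * b) <= P (fun w => U s w <= u * a)).
  { apply (P_mono _ _ _ hP).
    - apply (F_inter _ _ _ hP); apply (ev_F _ _ _ _ _ hU).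
    - apply (ev_F _ _ _ _ _ hU).
    - intuition. }
  destruct hU as [_ hU2]. rewrite (hU2 s (u * a)) in HP by lra.
  assert (/ u * P (fun w => U s w <= u * a /\ U t w <= u * b) <= / u * (u * a)).
  { apply Rmult_le_compat_l; auto. left; apply Rinv_0_lt_compat; lra. }
  replace (/ u * (u * a)) with a in H0 by (field; lra). lra.
Qed.

Lemma R_le_b Omega T F P U Rtc (hP : prob_space Omega F P)
  (hU : uniform_margins Omega T F P U) (hR : is_tail_copula Omega T P U Rtc) s t a b :
  0 <= a -> 0 <= b -> Rtc s t a b <= b.
Proof.
  intros ha hb.
  assert (H := lim2_le _ _ _ _ b (/ (b+1)) ltac:(apply Rinv_0_lt_compat; lra)
    (hR_lim _ _ _ _ _ hR s t a b ha hb) (flim_const 0)).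
  cut (Rtc s t a b - 0 <= b); [lra|]. apply H.
  intros u Hu. destruct (small_u b u hb Hu) as [h1 h2]. unfold tf.
  assert (HP : P (fun w => U s w <= u * a /\ U t w <= u * b) <= P (fun w => U t w <= u * b)).
  { apply (P_mono _ _ _ hP).
    - apply (F_inter _ _ _ hP); apply (ev_F _ _ _ _ _ hU).
    - apply (ev_F _ _ _ _ _ hU).
    - intuition. }
  destruct hU as [_ hU2]. rewrite (hU2 t (u * b)) in HP by lra.
  assert (/ u * P (fun w => U s w <= u * a /\ U t w <= u * b) <= / u * (u * b)).
  { apply Rmult_le_compat_l; auto. left; apply Rinv_0_lt_compat; lra. }
  replace (/ u * (u * b)) with b in H0 by (field; lra). lra.
Qed.

Lemma R_ge0 Omega T F P U Rtc (hP : prob_space Omega F P)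
  (hU : uniform_margins Omega T F P U) (hR : is_tail_copula Omega T P U Rtc) s t a b :
  0 <= a -> 0 <= b -> 0 <= Rtc s t a b.
Proof.
  intros ha hb.
  assert (H := lim2_le _ _ _ _ 0 1 ltac:(lra) (flim_const 0)
    (hR_lim _ _ _ _ _ hR s t a b ha hb)).
  cut (0 - Rtc s t a b <= 0); [lra|]. apply H.
  intros u Hu. unfold tf.
  assert (0 <= / u * P (fun w => U s w <= u * a /\ U t w <= u * b)); [|lra].
  apply Rmult_le_pos. left; apply Rinv_0_lt_compat; lra.
  apply hP. apply (F_inter _ _ _ hP); apply (ev_F _ _ _ _ _ hU).
Qed.
Lemma R_lip_ord Omega T F P U Rtc (hP : prob_space Omega F P)
  (hU : uniform_margins Omega T F P U) (hR : is_tail_copula Omega T P U Rtc) s t a a' b :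
  0 <= a -> a <= a' -> 0 <= b -> 0 <= Rtc s t a' b - Rtc s t a b <= a' - a.
Proof.
  intros ha haa hb.
  assert (ha' : 0 <= a') by lra.
  assert (EV := ev_F _ _ _ _ _ hU).
  assert (FI := F_inter _ _ _ hP). assert (FC := F_compl _ _ _ hP).
  split.
  - assert (H := lim2_le _ _ _ _ 0 1 ltac:(lra)
      (hR_lim _ _ _ _ _ hR s t a b ha hb) (hR_lim _ _ _ _ _ hR s t a' b ha' hb)).
    cut (Rtc s t a b - Rtc s t a' b <= 0); [lra|]. apply H.
    intros u Hu. unfold tf.
    assert (P (fun w => U s w <= u * a /\ U t w <= u * b) <=
            P (fun w => U s w <= u * a' /\ U t w <= u * b)).
    { apply (P_mono _ _ _ hP); auto. intros w [h1 h2]; split; auto.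
      assert (u * a <= u * a') by (apply Rmult_le_compat_l; lra). lra. }
    assert (0 < / u) by (apply Rinv_0_lt_compat; lra). nra.
  - assert (H := lim2_le _ _ _ _ (a' - a) (/ (a'+1)) ltac:(apply Rinv_0_lt_compat; lra)
      (hR_lim _ _ _ _ _ hR s t a' b ha' hb) (hR_lim _ _ _ _ _ hR s t a b ha hb)).
    apply H. intros u Hu. unfold tf.
    destruct (small_u a' u ha' Hu) as [h1 h2].
    assert (hua : u * a <= u * a') by (apply Rmult_le_compat_l; lra).
    assert (hua0 : 0 <= u * a) by (apply Rmult_le_pos; lra).
    set (A := fun w => U s w <= u * a). set (A' := fun w => U s w <= u * a').
    set (B := fun w => U t w <= u * b).
    change (/ u * P (fun w => A' w /\ B w) - / u * P (fun w => A w /\ B w) <= a' - a).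
    assert (S1 := P_split _ _ _ hP (fun w => A w /\ B w) (fun w => A' w /\ B w)
       ltac:(apply FI; apply EV) ltac:(apply FI; apply EV)
       ltac:(intros w [x1 x2]; split; auto; unfold A, A' in *; lra)).
    assert (S2 := P_split _ _ _ hP A A' ltac:(apply EV) ltac:(apply EV)
       ltac:(intros w x1; unfold A, A' in *; lra)).
    assert (M := P_mono _ _ _ hP (fun w => (A' w /\ B w) /\ ~ (A w /\ B w))
       (fun w => A' w /\ ~ A w)
       ltac:(apply FI; [apply FI; apply EV| apply FC; apply FI; apply EV])
       ltac:(apply FI; [apply EV | apply FC; apply EV])
       ltac:(intros w [[x1 x2] x3]; split; tauto)).
    destruct hU as [_ hU2].
    assert (PA : P A = u * a) by (apply hU2; lra).
    assert (PA' : P A' = u * a') by (apply hU2; lra).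
    assert (D : P (fun w => A' w /\ B w) - P (fun w => A w /\ B w) <= u * a' - u * a) by lra.
    assert (0 < / u) by (apply Rinv_0_lt_compat; lra).
    replace (a' - a) with (/ u * (u * a' - u * a)) by (field; lra).
    rewrite <- Rmult_minus_distr_l. apply Rmult_le_compat_l; lra.
Qed.

Lemma R_lip Omega T F P U Rtc (hP : prob_space Omega F P)
  (hU : uniform_margins Omega T F P U) (hR : is_tail_copula Omega T P U Rtc) s t a a' b :
  0 <= a -> 0 <= a' -> 0 <= b -> Rabs (Rtc s t a' b - Rtc s t a b) <= Rabs (a' - a).
Proof.
  intros ha ha' hb. destruct (Rle_dec a a').
  - assert (H := R_lip_ord _ _ _ _ _ _ hP hU hR s t a a' b ha r hb). split_Rabs; lra.
  - assert (H := R_lip_ord _ _ _ _ _ _ hP hU hR s t a' a b ha' ltac:(lra) hb). split_Rabs; lra.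
Qed.

Lemma R_hom Omega T F P U Rtc (hP : prob_space Omega F P)
  (hU : uniform_margins Omega T F P U) (hR : is_tail_copula Omega T P U Rtc) s t c :
  0 <= c -> Rtc s t c c = c * Rtc s t 1 1.
Proof.
  intros hc. destruct (Req_dec c 0) as [->|hc0].
  - assert (h1 := R_le_a _ _ _ _ _ _ hP hU hR s t 0 0 ltac:(lra) ltac:(lra)).
    assert (h2 := R_ge0 _ _ _ _ _ _ hP hU hR s t 0 0 ltac:(lra) ltac:(lra)). lra.
  - assert (hcp : 0 < c) by lra.
    set (g := fun u => c * tf P U s t 1 1 (u * c)).
    assert (Hg : flim g (c * Rtc s t 1 1)).
    { intros eps He. destruct (hR s t 1 1 ltac:(lra) ltac:(lra) (eps / c)
        ltac:(apply Rdiv_lt_0_compat; lra)) as [d [Hd Hd']].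
      exists (d / c). split; [apply Rdiv_lt_0_compat; lra|].
      intros u Hu. unfold g, tf.
      assert (Huc : 0 < u * c < d).
      { split; [nra|]. destruct Hu as [_ Hu]. apply (Rmult_lt_compat_r c) in Hu; auto.
        replace (d / c * c) with d in Hu by (field; lra). lra. }
      specialize (Hd' _ Huc).
      rewrite <- Rmult_minus_distr_l, Rabs_mult, (Rabs_pos_eq c) by lra.
      apply (Rmult_lt_compat_l c) in Hd'; auto.
      replace (c * (eps / c)) with eps in Hd' by (field; lra). exact Hd'. }
    assert (Hfg : forall u, 0 < u -> tf P U s t c c u = g u).
    { intros u Hu. unfold g, tf. rewrite !Rmult_1_r. field. lra. }
    assert (H1 := lim2_le _ _ _ _ 0 1 ltac:(lra) (hR_lim _ _ _ _ _ hR s t c c hc hc) Hg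
      ltac:(intros u Hu; rewrite Hfg by lra; lra)).
    assert (H2 := lim2_le _ _ _ _ 0 1 ltac:(lra) Hg (hR_lim _ _ _ _ _ hR s t c c hc hc)
      ltac:(intros u Hu; rewrite Hfg by lra; lra)).
    lra.
Qed.
Theorem lemmaA5 (Omega T : Type) (F : (Omega -> Prop) -> Prop)
  (P : (Omega -> Prop) -> R) (U : T -> Omega -> R)
  (Rtc : T -> T -> R -> R -> R)
  (hP : prob_space Omega F P)
  (hU : uniform_margins Omega T F P U)
  (hR : is_tail_copula Omega T P U Rtc)
  (sn : nat -> T) (xn : nat -> R) (s : T) (x : R)
  (hxn : forall n, 0 <= xn n) (hx : 0 <= x) :
  Un_cv (fun n => rho2 Rtc (sn n, xn n) (s, x)) 0 <->
  (Un_cv xn x /\ Un_cv (fun n => x * (Rtc (sn n) s 1 1 - 1)) 0).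
Proof.
  set (r := fun n => xn n - 2 * Rtc (sn n) s (xn n) x + x).
  set (e := fun n => x * (Rtc (sn n) s 1 1 - 1)).
  assert (Hr1 : forall n, Rabs (xn n - x) <= r n).
  { intro n. unfold r.
    assert (h1 := R_le_a _ _ _ _ _ _ hP hU hR (sn n) s (xn n) x (hxn n) hx).
    assert (h2 := R_le_b _ _ _ _ _ _ hP hU hR (sn n) s (xn n) x (hxn n) hx).
    split_Rabs; lra. }
  assert (Hr2 : forall n, Rabs (r n + 2 * e n) <= 3 * Rabs (xn n - x)).
  { intro n. unfold r, e.
    assert (h1 := R_lip _ _ _ _ _ _ hP hU hR (sn n) s (xn n) x x (hxn n) hx hx).
    assert (h2 := R_hom _ _ _ _ _ _ hP hU hR (sn n) s x hx).
    split_Rabs; lra. }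
  assert (Hrho : forall n, rho2 Rtc (sn n, xn n) (s, x) = sqrt (r n)) by reflexivity.
  unfold Un_cv, R_dist. fold e. setoid_rewrite Hrho. split.
  - intro H.
    assert (Hr : forall eps, 0 < eps -> exists N, forall n, (n >= N)%nat -> r n < eps).
    { intros eps He. destruct (H (Rmin 1 eps) ltac:(apply Rmin_pos; lra)) as [N HN].
      exists N. intros n Hn. specialize (HN n Hn).
      assert (h0 : 0 <= r n) by (specialize (Hr1 n); assert (0 <= Rabs (xn n - x)) by apply Rabs_pos; lra).
      assert (hs := sqrt_sqrt _ h0). assert (hp := sqrt_pos (r n)).
      rewrite Rminus_0_r, Rabs_pos_eq in HN by auto.
      assert (m1 := Rmin_l 1 eps). assert (m2 := Rmin_r 1 eps). nra. }
    split.
    + intros eps He. destruct (Hr eps He) as [N HN]. exists N. intros n Hn.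
      specialize (HN n Hn). specialize (Hr1 n). lra.
    + intros eps He. destruct (Hr (eps/2) ltac:(lra)) as [N HN]. exists N. intros n Hn.
      specialize (HN n Hn). specialize (Hr1 n). specialize (Hr2 n).
      rewrite Rminus_0_r. split_Rabs; lra.
  - intros [H1 H2] eps He.
    assert (He2 : 0 < eps * eps) by nra.
    destruct (H1 (eps * eps / 6) ltac:(lra)) as [N1 HN1].
    destruct (H2 (eps * eps / 4) ltac:(lra)) as [N2 HN2].
    exists (max N1 N2). intros n Hn.
    specialize (HN1 n ltac:(lia)). specialize (HN2 n ltac:(lia)).
    specialize (Hr1 n). specialize (Hr2 n).
    rewrite Rminus_0_r in *.
    assert (h0 : 0 <= r n) by (assert (0 <= Rabs (xn n - x)) by apply Rabs_pos; lra).
    assert (hlt : r n < eps * eps) by (split_Rabs; lra).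
    rewrite Rabs_pos_eq by apply sqrt_pos.
    rewrite <- (sqrt_square eps) by lra.
    apply sqrt_lt_1; lra.
Qed.
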